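(* Let $V_1,V_2$ be complex vector spaces of dimensions $n_1\geq 2$, $n_2\geq 2$, with bases $(e_1,\dots,e_{n_1})$ and $(f_1,\dots,f_{n_2})$, and let $n=\min(n_1,n_2)$. Let $G=\mathrm{GL}(V_1)\times\mathrm{GL}(V_2)$ act naturally on $\overline{X}=\mathbb{P}(V_1)\times\mathbb{P}(V_2)\times\mathbb{P}((V_1\otimes V_2)^* )$ and let $\overline{\mathcal{L}}=\mathcal{O}(1)\boxtimes\mathcal{O}(1)\boxtimes\mathcal{O}(1)$ with its natural $G$-linearisation. Then the set $\overline{X}^{us}(\overline{\mathcal{L}})$ of unstable points is the closure of the $G$-orbit of $\overline{x}=(\mathbb{C}e_1,\mathbb{C}f_2,\mathbb{C}\varphi_n)$, where $\varphi_n=\sum_{i=1}^n e_i^*\otimes f_i^*\in V_1^*\otimes V_2^*\simeq(V_1\otimes V_2)^*$.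
   Context: $(e_i^* )$ and $(f_j^* )$ are the dual bases. $G$ acts on $(V_1\otimes V_2)^*$ by the contragredient of the tensor product action. For a $G$-linearised line bundle $\mathcal{N}$ on a $G$-variety $Y$, the semi-stable set is $Y^{ss}(\mathcal{N})=\{y:\exists k\geq1,\exists\sigma\in\mathrm{H}^0(Y,\mathcal{N}^{\otimes k})^G,\ \sigma(y)\neq0\}$, and the unstable set $Y^{us}(\mathcal{N})$ is its complement. *)

(* Defs.v *)
From HB Require Import structures.
From mathcomp Require Import all_boot all_order all_algebra.
From mathcomp Require Import reals.
From mathcomp Require Import complex.
From mathcomp Require Import mpoly.
Set Implicit Arguments. Unset Strict Implicit. Unset Printing Implicit Defensive.
Import GRing.Theory Num.Theory.
Local Open Scope ring_scope.

Section Setup.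
Variable R : realType.
Local Notation C := (R[i]).
Variables n1 n2 : nat.

(* Affine cone coordinates of Xbar = P(V1) x P(V2) x P((V1 (x) V2)^* ):
   V1 = C^n1, V2 = C^n2 (column vectors), and a bilinear form
   phi in (V1 (x) V2)^* is an n1 x n2 matrix M with phi(v (x) w) = v^T M w.
   The polynomial ring has n1 + n2 + n1*n2 variables: first the coordinates
   of v, then those of w, then the entries of M. *)
Definition nvar : nat := (n1 + n2 + n1 * n2)%N.

Definition coords (v : 'cV[C]_n1) (w : 'cV[C]_n2) (M : 'M[C]_(n1, n2))
  : 'I_nvar -> C :=
  fun i => (row_mx (row_mx v^T w^T) (mxvec M)) 0 i.

Definition deg1 (m : 'X_{1.. nvar}) : nat :=
  (\sum_(i < nvar | (i < n1)%N) m i)%N.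
Definition deg2 (m : 'X_{1.. nvar}) : nat :=
  (\sum_(i < nvar | (n1 <= i < n1 + n2)%N) m i)%N.
Definition deg3 (m : 'X_{1.. nvar}) : nat :=
  (\sum_(i < nvar | (n1 + n2 <= i)%N) m i)%N.

(* p is multihomogeneous of multidegree (a,b,c), i.e. a section of
   O(a) [x] O(b) [x] O(c) on Xbar *)
Definition multihomog (p : {mpoly C[nvar]}) (a b c : nat) : Prop :=
  forall m, m \in msupp p -> [/\ deg1 m = a, deg2 m = b & deg3 m = c].

(* natural action of G = GL(V1) x GL(V2); on (V1 (x) V2)^* it is the
   contragredient of the tensor product action *)
Definition act (g : 'M[C]_n1) (h : 'M[C]_n2)
  (v : 'cV[C]_n1) (w : 'cV[C]_n2) (M : 'M[C]_(n1, n2)) :=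
  (g *m v, h *m w, (invmx g)^T *m M *m invmx h).

Definition eval_act (p : {mpoly C[nvar]}) g h v w M : C :=
  let: (v', w', M') := act g h v w M in p.@[coords v' w' M'].

Definition Ginvariant (p : {mpoly C[nvar]}) : Prop :=
  forall (g : 'M[C]_n1) (h : 'M[C]_n2), g \in unitmx -> h \in unitmx ->
  forall v w M, eval_act p g h v w M = p.@[coords v w M].

(* semi-stable / unstable points for Lbar = O(1) [x] O(1) [x] O(1):
   H^0(Xbar, Lbar^k)^G = G-invariant multihomogeneous polys of degree (k,k,k) *)
Definition semistable v w M : Prop :=
  exists k : nat, (1 <= k)%N /\
  exists p : {mpoly C[nvar]},
    [/\ multihomog p k k k, Ginvariant p & p.@[coords v w M] != 0].

Definition unstable v w M : Prop := ~ semistable v w M.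

Definition e1 : 'cV[C]_n1 := \col_(i < n1) (((i : nat) == 0%N)%:R).
Definition f2 : 'cV[C]_n2 := \col_(j < n2) (((j : nat) == 1%N)%:R).
Definition phin : 'M[C]_(n1, n2) :=
  \matrix_(i < n1, j < n2) ((((i : nat) == j) && (i < minn n1 n2)%N)%:R).

(* (Zariski) closure of the G-orbit of xbar in Xbar: a point lies in it iff
   every multihomogeneous polynomial vanishing on the orbit vanishes at it *)
Definition in_orbit_closure v w M : Prop :=
  forall (a b c : nat) (p : {mpoly C[nvar]}), multihomog p a b c ->
    (forall (g : 'M[C]_n1) (h : 'M[C]_n2), g \in unitmx -> h \in unitmx ->
       eval_act p g h e1 f2 phin = 0) ->
    p.@[coords v w M] = 0.

End Setup.

(* Main.v *)
Require Import Defs.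
From HB Require Import structures.
From mathcomp Require Import all_boot all_order all_algebra.
From mathcomp Require Import reals complex mpoly.
From mathcomp Require Import ring zify.
Import GRing.Theory Num.Theory.
Local Open Scope ring_scope.
Set Implicit Arguments. Unset Strict Implicit. Unset Printing Implicit Defensive.
Section S.
Variable R : realType.
Local Notation C := (R[i]).
Variables n1 n2 : nat.
Local Notation N := (nvar n1 n2).

Definition iv (a : 'I_n1) : 'I_N := lshift (n1 * n2) (lshift n2 a).
Definition iw (b : 'I_n2) : 'I_N := lshift (n1 * n2) (rshift n1 b).
Definition iM (a : 'I_n1) (b : 'I_n2) : 'I_N := rshift (n1 + n2) (mxvec_index a b).

Variant idx_spec : 'I_N -> Type :=
 | IV a : idx_spec (iv a) | IW b : idx_spec (iw b) | IM a b : idx_spec (iM a b).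

Lemma idxP i : idx_spec i.
Proof.
case: (split_ordP i) => [j ->|k ->].
  by case: (split_ordP j) => [a ->|b ->]; constructor.
by case: (mxvec_indexP k) => a b; constructor.
Qed.

Section Co.
Variables (v : 'cV[C]_n1) (w : 'cV[C]_n2) (M : 'M[C]_(n1, n2)).
Lemma coords_iv a : coords v w M (iv a) = v a 0.
Proof. by rewrite /coords /iv !row_mxEl mxE. Qed.
Lemma coords_iw b : coords v w M (iw b) = w b 0.
Proof. by rewrite /coords /iw row_mxEl row_mxEr mxE. Qed.
Lemma coords_iM a b : coords v w M (iM a b) = M a b.
Proof. by rewrite /coords /iM row_mxEr mxvecE. Qed.
End Co.

Lemma val_iv a : (iv a : nat) = a. Proof. by []. Qed.
Lemma val_iw b : (iw b : nat) = (n1 + b)%N. Proof. by []. Qed.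
Lemma val_iM a b : (n1 + n2 <= iM a b)%N. Proof. by rewrite /= leq_addr. Qed.

Definition lam (s t u : C) (i : 'I_N) := if (i < n1)%N then s else if (i < n1 + n2)%N then t else u.

Lemma coords_scale s t u v w M i :
  coords (s *: v) (t *: w) (u *: M) i = lam s t u i * coords v w M i.
Proof.
rewrite /lam; case: (idxP i) => [a|b|a b].
- by rewrite !coords_iv val_iv ltn_ord mxE.
- by rewrite !coords_iw val_iw ltnNge leq_addr /= ltn_add2l ltn_ord mxE.
- have h := val_iM a b.
  rewrite !coords_iM mxE ifF; last by apply/negbTE; rewrite -leqNgt (leq_trans _ h) ?leq_addr.
  by rewrite ifF //; apply/negbTE; rewrite -leqNgt.
Qed.

Lemma prod_lam s t u (m : 'X_{1.. N}) :
  \prod_i lam s t u i ^+ m i = s ^+ deg1 m * t ^+ deg2 m * u ^+ deg3 m.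
Proof.
rewrite /deg1 /deg2 /deg3 -!prodrXr.
rewrite (big_mkcond (fun i : 'I_N => (i < n1)%N)) (big_mkcond (fun i : 'I_N => (n1 <= i < n1 + n2)%N)).
rewrite (big_mkcond (fun i : 'I_N => (n1 + n2 <= i)%N)) -!big_split /=.
apply: eq_bigr => i _; rewrite /lam.
case: (ltnP i n1) => h1.
  have h3 : (n1 + n2 <= i)%N = false by apply/negbTE; rewrite -ltnNge (leq_trans h1 (leq_addr n2 n1)).
  by rewrite h3 /= !mulr1.
case: (ltnP i (n1 + n2)) => h2 /=.
  by rewrite mulr1 mul1r.
by rewrite mul1r mul1r.
Qed.

Lemma meval_scale (p : {mpoly C[N]}) a b c s t u v w M :
  multihomog p a b c ->
  p.@[coords (s *: v) (t *: w) (u *: M)] = s ^+ a * t ^+ b * u ^+ c * p.@[coords v w M].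
Proof.
move=> Hp; rewrite !mevalE big_distrr /=; apply: eq_big_seq => m hm.
have [d1 d2 d3] := Hp m hm.
under eq_bigr do rewrite coords_scale exprMn.
by rewrite big_split /= prod_lam d1 d2 d3 mulrCA.
Qed.

Lemma poly_all0 (q : {poly C}) : (forall t, q.[t] = 0) -> q = 0.
Proof.
move=> H; apply/eqP; apply/negPn/negP => q0.
pose rs := [seq k%:R | k <- iota 0 (size q)] : seq C.
have H1 : all (root q) rs by apply/allP => x _; rewrite /root H.
have H2 : uniq rs.
  by rewrite map_inj_uniq ?iota_uniq // => x y /eqP; rewrite eqr_nat => /eqP.
by have := max_poly_roots q0 H1 H2; rewrite size_map size_iota ltnn.
Qed.

Definition ev (t : C) m n (A : 'M[{poly C}]_(m, n)) := map_mx (horner_eval t) A.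

Lemma evC t m n (A : 'M[C]_(m, n)) : map_mx (horner_eval t) (map_mx polyC A) = A.
Proof. by apply/matrixP => i j; rewrite !mxE /= horner_evalE hornerC. Qed.

Lemma invmxM_unit k (g g' : 'M[C]_k) : g \in unitmx -> g' \in unitmx ->
  invmx (g *m g') = invmx g' *m invmx g.
Proof.
move=> ug ug'.
have H1 : g *m g' *m (invmx g' *m invmx g) = 1%:M by rewrite mulmxA mulmxK // mulmxV.
by rewrite -[LHS]mulmx1 -H1 mulmxA mulVmx ?unitmx_mul ?ug ?ug' // mul1mx.
Qed.

Lemma rank1_inv k (x : 'cV[C]_k) (r : 'rV[C]_k) :
  1 + (r *m x) 0 0 != 0 ->
  (1%:M + x *m r) *m (1%:M - (1 + (r *m x) 0 0)^-1 *: (x *m r)) = 1%:M.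
Proof.
set c := (r *m x) 0 0 => c0; set d := (1 + c)^-1.
have rx : r *m x = c%:M by rewrite [LHS]mx11_scalar.
set X := x *m r.
have XX : X *m X = c *: X by rewrite /X mulmxA -(mulmxA x) rx mul_mx_scalar scalemxAl.
rewrite mulmxDl mul1mx mulmxBr mulmx1 -scalemxAr XX scalerA.
have hd : d * (1 + c) = 1 by rewrite mulVf.
have -> : X - (d * c) *: X = (1 - d * c) *: X by rewrite scalerBl scale1r.
rewrite -addrA -scaleNr -scalerDl.
have -> : - d + (1 - d * c) = 0 by rewrite -hd; ring.
by rewrite scale0r addr0.
Qed.

Lemma rank1_invl k (x : 'cV[C]_k) (r : 'rV[C]_k) :
  1 + (r *m x) 0 0 != 0 ->
  (1%:M - (1 + (r *m x) 0 0)^-1 *: (x *m r)) *m (1%:M + x *m r) = 1%:M.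
Proof. by move=> h; apply: mulmx1C; apply: rank1_inv. Qed.

Lemma pid_mx_sq m r : (m <= r)%N -> pid_mx r = 1%:M :> 'M[C]_m.
Proof. by move=> h; rewrite -pid_mx_minv (minn_idPl h) pid_mx_1. Qed.

Lemma phinE : phin R n1 n2 = pid_mx (minn n1 n2).
Proof. by apply/matrixP => i j; rewrite !mxE. Qed.

Hypothesis H1 : (2 <= n1)%N.
Hypothesis H2 : (2 <= n2)%N.
Definition i0 : 'I_n1 := Ordinal (ltnW H1).
Definition i1 : 'I_n1 := Ordinal H1.
Definition j0 : 'I_n2 := Ordinal (ltnW H2).
Definition j1 : 'I_n2 := Ordinal H2.

Lemma e1E : e1 R n1 = delta_mx i0 0.
Proof. by apply/matrixP => i j; rewrite !mxE ord1 eqxx andbT. Qed.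
Lemma f2E : f2 R n2 = delta_mx j1 0.
Proof. by apply/matrixP => i j; rewrite !mxE ord1 eqxx andbT. Qed.

Lemma detA k (A0 : 'M[C]_k) t : (char_poly (- A0)).[t] = \det (A0 + t%:M).
Proof.
rewrite /char_poly -horner_evalE -det_map_mx; congr (\det _).
apply/matrixP => i j; rewrite !mxE /= horner_evalE.
by rewrite hornerD hornerN hornerMn hornerX hornerC opprK addrC.
Qed.

Lemma mulmx_deltaE m k (A : 'M[C]_(m, k)) j i : (A *m delta_mx j (0 : 'I_1)) i 0 = A i j.
Proof. by rewrite -colE mxE. Qed.

Lemma delta_mulmxE m k (A : 'M[C]_(m, k)) j i : (delta_mx (0 : 'I_1) i *m A) 0 j = A i j.
Proof. by rewrite -rowE mxE. Qed.

Lemma exists_unit_col k (u : 'cV[C]_k) (j : 'I_k) : u != 0 ->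
  exists2 g : 'M[C]_k, g \in unitmx & g *m delta_mx j (0 : 'I_1) = u.
Proof.
move=> u0.
have [l ul] : exists l, u l 0 != 0.
  case: (pickP (fun l => u l 0 != 0)) => [l ul|all0]; first by exists l.
  case/negP: u0; apply/eqP/matrixP => a b; rewrite [b]ord1 mxE.
  by move: (all0 a) => /negbFE/eqP.
pose x := u - delta_mx l 0.
pose r : 'rV[C]_k := delta_mx 0 l.
have c1 : 1 + (r *m x) 0 0 = u l 0.
  by rewrite delta_mulmxE /x [fun_of_matrix (_ - _) _ _]mxE !mxE !eqxx /= addrCA subrr addr0.
have c0 : 1 + (r *m x) 0 0 != 0 by rewrite c1.
have [ug1 _] := mulmx1_unit (rank1_inv c0).
have g1l : (1%:M + x *m r) *m delta_mx l (0 : 'I_1) = u.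
  rewrite mulmxDl mul1mx -mulmxA /r mul_delta_mx.
  have -> : (delta_mx 0 0 : 'M[C]_1) = 1%:M by apply/matrixP => u1 u2; rewrite [u1]ord1 [u2]ord1 !mxE.
  by rewrite mulmx1 /x addrC subrK.
exists ((1%:M + x *m r) *m tperm_mx j l).
  by rewrite unitmx_mul ug1 unitmx_perm.
rewrite -mulmxA -g1l; congr (_ *m _).
apply/matrixP => a b; rewrite [b]ord1 mulmx_deltaE tperm_mxEsub !mxE eqxx andbT.
case: (perm.tpermP j l a) => [->|->|aj al]; rewrite ?eqxx ?(eq_sym l j) //.
by move/eqP/negbTE: aj => ->; move/eqP/negbTE: al => ->.
Qed.

Lemma diag_inv k (d e : 'rV[C]_k) : (forall i, d 0 i * e 0 i = 1) ->
  invmx (diag_mx d) = diag_mx e /\ diag_mx d \in unitmx.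
Proof.
move=> H.
have de : diag_mx d *m diag_mx e = 1%:M.
  by rewrite mulmx_diag; apply/matrixP => i j; rewrite !mxE H.
have [ud _] := mulmx1_unit de; split => //.
by rewrite -[LHS]mulmx1 -de mulKmx.
Qed.

Lemma inv_x0 (p : {mpoly C[N]}) k : (1 <= k)%N -> multihomog p k k k -> Ginvariant p ->
  p.@[coords (e1 R n1) (f2 R n2) (phin R n1 n2)] = 0.
Proof.
move=> k1 Hp Hinv.
have two0 : (2 : C) != 0 by rewrite pnatr_eq0.
pose d1 : 'rV[C]_n1 := \row_i (if i == i0 then 2 else 1).
pose e1' : 'rV[C]_n1 := \row_i (if i == i0 then 2^-1 else 1).
pose d2 : 'rV[C]_n2 := \row_j (if j == j0 then 2^-1 else 1).
pose e2' : 'rV[C]_n2 := \row_j (if j == j0 then 2 else 1).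
have [ig ug] : invmx (diag_mx d1) = diag_mx e1' /\ diag_mx d1 \in unitmx.
  by apply: diag_inv => i; rewrite !mxE; case: ifP => _; rewrite ?mulfV ?mulr1.
have [ih uh] : invmx (diag_mx d2) = diag_mx e2' /\ diag_mx d2 \in unitmx.
  by apply: diag_inv => i; rewrite !mxE; case: ifP => _; rewrite ?mulVf ?mulr1.
have := Hinv _ _ ug uh (e1 R n1) (f2 R n2) (phin R n1 n2).
rewrite /eval_act /act ig ih tr_diag_mx.
have -> : diag_mx d1 *m e1 R n1 = 2 *: e1 R n1.
  rewrite e1E mul_diag_mx; apply/matrixP => i j; rewrite !mxE.
  by case: (i == i0); rewrite /= ?mulr1 ?mulr0 ?mul1r.
have -> : diag_mx d2 *m f2 R n2 = 1 *: f2 R n2.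
  rewrite f2E mul_diag_mx; apply/matrixP => i j; rewrite !mxE.
  case: (eqVneq i j1) => [->|]; first by rewrite /= mul1r.
  by move=> nj; rewrite /= !mulr0.
have -> : diag_mx e1' *m phin R n1 n2 *m diag_mx e2' = 1 *: phin R n1 n2.
  rewrite mul_mx_diag mul_diag_mx; apply/matrixP => i j; rewrite !mxE.
  case: (eqVneq (i : nat) j) => [eij|nij] /=; last by rewrite !mulr0 !mul0r.
  have -> : (j == j0) = (i == i0) by rewrite -!val_eqE /= eij.
  case: (i == i0); rewrite ?mul1r ?mulr1 //.
  by rewrite mulrAC mulVf // mul1r.
rewrite (meval_scale _ _ _ _ _ _ Hp) !expr1n !mulr1 => /eqP.
rewrite -subr_eq0 -{2}(mul1r (p.@[_])) -mulrBl mulf_eq0 => /orP[|/eqP //].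
rewrite subr_eq0 -natrX -[X in _ == X]/(1%:R) eqr_nat -{2}(expn0 2) eqn_exp2l // => /eqP kk.
by move: k1; rewrite kk.
Qed.

Section Zsec.
Variables (p : {mpoly C[N]}) (a b c : nat).
Hypothesis Hp : multihomog p a b c.

Definition actp g h (v : 'cV[C]_n1) (w : 'cV[C]_n2) (M : 'M[C]_(n1, n2)) :=
  p.@[coords (g *m v) (h *m w) ((invmx g)^T *m M *m invmx h)].
Definition Z v w M := forall g h, g \in unitmx -> h \in unitmx -> actp g h v w M = 0.

Lemma Z_act v w M g' h' : Z v w M -> g' \in unitmx -> h' \in unitmx ->
  Z (g' *m v) (h' *m w) ((invmx g')^T *m M *m invmx h').
Proof.
move=> HZ ug' uh' g h ug uh.
have := HZ (g *m g') (h *m h'); rewrite !unitmx_mul ug ug' uh uh' => /(_ isT isT).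
rewrite /actp !invmxM_unit // trmx_mul.
by rewrite !mulmxA.
Qed.

Lemma Z_scale v w M s t u : s != 0 -> t != 0 -> u != 0 ->
  Z (s *: v) (t *: w) (u *: M) -> Z v w M.
Proof.
move=> s0 t0 u0 HZ g h ug uh; have := HZ g h ug uh.
rewrite /actp -!scalemxAr -scalemxAl (meval_scale _ _ _ _ _ _ Hp) => /eqP.
by rewrite !mulf_eq0 !expf_eq0 (negbTE s0) (negbTE t0) (negbTE u0) !andbF /= => /eqP.
Qed.

Lemma Zlim (V : 'cV[{poly C}]_n1) (W : 'cV[{poly C}]_n2) (Mt : 'M[{poly C}]_(n1, n2)) (D : {poly C}) :
  D != 0 -> (forall t, D.[t] != 0 -> Z (ev t V) (ev t W) (ev t Mt)) ->
  Z (ev 0 V) (ev 0 W) (ev 0 Mt).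
Proof.
move=> D0 HZ g h ug uh.
pose gP := map_mx polyC g; pose hP := map_mx polyC h.
pose gi := map_mx polyC (invmx g)^T; pose hi := map_mx polyC (invmx h).
pose Gam i := (row_mx (row_mx (gP *m V)^T (hP *m W)^T) (mxvec (gi *m Mt *m hi))) 0 i.
have evGam t i : (Gam i).[t] = coords (g *m ev t V) (h *m ev t W) ((invmx g)^T *m ev t Mt *m invmx h) i.
  rewrite /Gam -horner_evalE /coords.
  transitivity (map_mx (horner_eval t) (row_mx (row_mx (gP *m V)^T (hP *m W)^T) (mxvec (gi *m Mt *m hi))) 0 i); first by rewrite [RHS]mxE.
  by rewrite !map_row_mx map_mxvec -!map_trmx !(map_mxM (horner_eval t : {rmorphism {poly C} -> C})) /gP /hP /gi /hi !evC.
pose E := \sum_(m <- msupp p) (p@_m)%:P * \prod_i Gam i ^+ m i.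
have evE s : E.[s] = actp g h (ev s V) (ev s W) (ev s Mt).
  rewrite /actp mevalE -horner_evalE rmorph_sum; apply: eq_bigr => m _.
  rewrite rmorphM rmorph_prod /= horner_evalE hornerC; congr (_ * _).
  by apply: eq_bigr => i _; rewrite rmorphXn /= horner_evalE evGam.
have : E * D = 0.
  apply: poly_all0 => t; rewrite hornerM.
  by case: (eqVneq D.[t] 0) => [->|/HZ H]; rewrite ?mulr0 // evE H ?mul0r.
move/eqP; rewrite mulf_eq0 (negbTE D0) orbF => /eqP E0.
by rewrite -evE E0 horner0.
Qed.


Hypothesis HZ0 : Z (e1 R n1) (f2 R n2) (phin R n1 n2).

Lemma sc0 k : (0%:M : 'M[C]_k) = 0.
Proof. by apply/matrixP => i j; rewrite !mxE mul0rn. Qed.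

Definition addX k (A : 'M[C]_k) : 'M[{poly C}]_k := map_mx polyC A + 'X%:M.

Lemma ev_addX k (A : 'M[C]_k) t : map_mx (horner_eval t) (addX A) = A + t%:M.
Proof.
apply/matrixP => i j; rewrite !mxE /= horner_evalE.
by rewrite hornerD hornerMn hornerX hornerC.
Qed.

Lemma Z_fact (A0 : 'M[C]_n1) (B0 : 'M[C]_n2) :
  A0^T *m delta_mx i0 0 = delta_mx i0 (0 : 'I_1) -> B0 *m delta_mx j1 0 = delta_mx j1 (0 : 'I_1) ->
  Z (e1 R n1) (f2 R n2) (A0 *m phin R n1 n2 *m B0).
Proof.
move=> hA hB.
pose D := ('X + 1%:P) * (char_poly (- A0) * char_poly (- B0)).
have D0 : D != 0.
  by apply: monic_neq0; rewrite /D monicMl ?monicXaddC // monicMl ?char_poly_monic.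
have := @Zlim (map_mx polyC (e1 R n1)) (map_mx polyC (f2 R n2))
  (addX A0 *m map_mx polyC (phin R n1 n2) *m addX B0) D D0.
rewrite /ev !(map_mxM (horner_eval 0 : {rmorphism {poly C} -> C})) !evC !ev_addX !sc0 !addr0.
apply => t; rewrite !(map_mxM (horner_eval t : {rmorphism {poly C} -> C})) !evC !ev_addX.
rewrite /D !hornerM !detA hornerD hornerX hornerC !mulf_eq0 !negb_or => /and3P[t1 dA dB].
have uA : A0 + t%:M \in unitmx by rewrite unitmxE unitfE.
have uB : B0 + t%:M \in unitmx by rewrite unitmxE unitfE.
have uAT : (A0 + t%:M)^T \in unitmx by rewrite unitmx_tr.
have uAi : invmx (A0 + t%:M)^T \in unitmx by rewrite unitmx_inv.
have uBi : invmx (B0 + t%:M) \in unitmx by rewrite unitmx_inv.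
have key := Z_act HZ0 uAi uBi.
rewrite !invmxK trmxK in key.
have hA' : (A0 + t%:M)^T *m e1 R n1 = (t + 1) *: e1 R n1.
  by rewrite e1E linearD /= tr_scalar_mx mulmxDl hA mul_scalar_mx scalerDl scale1r addrC.
have hB' : (B0 + t%:M) *m f2 R n2 = (t + 1) *: f2 R n2.
  by rewrite f2E mulmxDl hB mul_scalar_mx scalerDl scale1r addrC.
have hAi : invmx (A0 + t%:M)^T *m e1 R n1 = (t + 1)^-1 *: e1 R n1.
  have := congr1 (fun x => (t + 1)^-1 *: (invmx (A0 + t%:M)^T *m x)) hA'.
  by rewrite /= mulKmx // scalemxAr scalerA mulVf // scale1r => ->.
have hBi : invmx (B0 + t%:M) *m f2 R n2 = (t + 1)^-1 *: f2 R n2.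
  have := congr1 (fun x => (t + 1)^-1 *: (invmx (B0 + t%:M) *m x)) hB'.
  by rewrite /= mulKmx // scalemxAr scalerA mulVf // scale1r => ->.
rewrite hAi hBi -[_ *m _ *m (B0 + _)]scale1r in key.
by apply: (Z_scale _ _ (oner_neq0 _) key); rewrite invr_eq0.
Qed.


Lemma ZN_gen1 (hle : (n1 <= n2)%N) (Nm : 'M[C]_(n1, n2)) :
  Nm i0 j1 = 0 -> Nm i1 j1 != 0 -> Z (e1 R n1) (f2 R n2) Nm.
Proof.
move=> h01 h11.
pose y := Nm *m delta_mx j1 (0 : 'I_1).
pose x := y - delta_mx i1 0.
pose r : 'rV[C]_n1 := delta_mx 0 i1.
have c1 : 1 + (r *m x) 0 0 = Nm i1 j1.
  by rewrite delta_mulmxE /x /y [fun_of_matrix (_ - _) _ _]mxE mulmx_deltaE !mxE !eqxx /= addrCA subrr addr0.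
have c0 : 1 + (r *m x) 0 0 != 0 by rewrite c1.
pose A0 := 1%:M + x *m r.
pose K := 1%:M - (1 + (r *m x) 0 0)^-1 *: (x *m r).
have AK : A0 *m K = 1%:M by apply: rank1_inv.
have KA : K *m A0 = 1%:M by apply: rank1_invl.
pose B0 := (phin R n1 n2)^T *m (K *m Nm).
have pp : phin R n1 n2 *m (phin R n1 n2)^T = 1%:M.
  by rewrite phinE tr_pid_mx mul_pid_mx pid_mx_sq // minnn !leq_min hle !leqnn.
have -> : Nm = A0 *m phin R n1 n2 *m B0.
  by rewrite /B0 -mulmxA (mulmxA (phin R n1 n2)) pp mul1mx mulmxA AK mul1mx.
apply: Z_fact.
  rewrite /A0 linearD /= trmx1 trmx_mul mulmxDl mul1mx -mulmxA.
  have -> : x^T *m delta_mx i0 (0 : 'I_1) = 0.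
    apply/matrixP => u1 u2; rewrite [u1]ord1 [u2]ord1 mulmx_deltaE [x^T _ _]mxE [RHS]mxE /x.
    rewrite [fun_of_matrix (_ - _) _ _]mxE mulmx_deltaE h01 mxE.
    by rewrite mxE /= subr0.
  by rewrite mulmx0 addr0.
have Ay : A0 *m delta_mx i1 0 = y.
  rewrite /A0 mulmxDl mul1mx -mulmxA /r mul_delta_mx.
  have -> : (delta_mx 0 0 : 'M[C]_1) = 1%:M by apply/matrixP => u1 u2; rewrite [u1]ord1 [u2]ord1 !mxE.
  by rewrite mulmx1 /x addrC subrK.
rewrite /B0 -!mulmxA -/y -Ay (mulmxA K) KA mul1mx phinE tr_pid_mx.
apply/matrixP => k u2; rewrite [u2]ord1 mulmx_deltaE !mxE eqxx andbT /=.
have -> : (k == j1) = (k == 1%N :> nat) by [].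
by case: eqP => //= ->; rewrite leq_min H1 H2.
Qed.


Lemma ZN_gen2 (hle : (n2 <= n1)%N) (Nm : 'M[C]_(n1, n2)) :
  Nm i0 j1 = 0 -> Nm i0 j0 != 0 -> Z (e1 R n1) (f2 R n2) Nm.
Proof.
move=> h01 h00.
pose z : 'rV[C]_n2 := delta_mx 0 i0 *m Nm.
pose x : 'cV[C]_n2 := delta_mx j0 0.
pose r := z - delta_mx 0 j0.
have c1 : 1 + (r *m x) 0 0 = Nm i0 j0.
  by rewrite mulmx_deltaE /r [fun_of_matrix (_ - _) _ _]mxE delta_mulmxE !mxE !eqxx /= addrCA subrr addr0.
have c0 : 1 + (r *m x) 0 0 != 0 by rewrite c1.
pose B0 := 1%:M + x *m r.
pose K := 1%:M - (1 + (r *m x) 0 0)^-1 *: (x *m r).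
have BK : B0 *m K = 1%:M by apply: rank1_inv.
have KB : K *m B0 = 1%:M by apply: rank1_invl.
pose A0 := Nm *m K *m (phin R n1 n2)^T.
have pp : (phin R n1 n2)^T *m phin R n1 n2 = 1%:M.
  by rewrite phinE tr_pid_mx mul_pid_mx pid_mx_sq // minnn !leq_min hle !leqnn.
have -> : Nm = A0 *m phin R n1 n2 *m B0.
  by rewrite /A0 -(mulmxA _ _ (phin R n1 n2)) pp mulmx1 -mulmxA KB mulmx1.
have hz : delta_mx 0 j0 *m B0 = z.
  rewrite /B0 mulmxDr mulmx1 mulmxA /x mul_delta_mx.
  have -> : (delta_mx 0 0 : 'M[C]_1) = 1%:M by apply/matrixP => u1 u2; rewrite [u1]ord1 [u2]ord1 !mxE.
  by rewrite mul1mx /r addrC subrK.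
apply: Z_fact.
  rewrite /A0 !trmx_mul trmxK -!mulmxA.
  have -> : Nm^T *m delta_mx i0 (0 : 'I_1) = z^T by rewrite /z trmx_mul trmx_delta.
  rewrite -trmx_mul -hz -mulmxA BK mulmx1 trmx_delta phinE.
  apply/matrixP => k u2; rewrite [u2]ord1 mulmx_deltaE !mxE eqxx andbT /=.
  have -> : (k == i0) = (k == 0%N :> nat) by [].
  by case: eqP => //= ->; rewrite leq_min (ltnW H1) (ltnW H2).
rewrite /B0 mulmxDl mul1mx -mulmxA.
have -> : r *m delta_mx j1 (0 : 'I_1) = 0.
  apply/matrixP => u1 u2; rewrite [u1]ord1 [u2]ord1 mulmx_deltaE [RHS]mxE /r.
  rewrite [fun_of_matrix (_ - _) _ _]mxE delta_mulmxE h01 mxE.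
  by rewrite mxE /= subr0.
by rewrite mulmx0 addr0.
Qed.


Lemma ev_line k l (A B : 'M[C]_(k, l)) t :
  map_mx (horner_eval t) (map_mx polyC A + 'X *: map_mx polyC B) = A + t *: B.
Proof.
apply/matrixP => i j; rewrite !mxE /= horner_evalE.
by rewrite hornerD hornerC hornerM hornerX hornerC.
Qed.

Lemma ZN (Nm : 'M[C]_(n1, n2)) : Nm i0 j1 = 0 -> Z (e1 R n1) (f2 R n2) Nm.
Proof.
move=> h01.
have key : forall (E : 'M[C]_(n1, n2)) (P : 'M[C]_(n1, n2) -> Prop) (q : 'I_n1) (q' : 'I_n2),
  E q q' = 1 -> (forall t, (Nm + t *: E) q q' != 0 -> P (Nm + t *: E) -> Z (e1 R n1) (f2 R n2) (Nm + t *: E)) ->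
  (forall t, P (Nm + t *: E)) -> Z (e1 R n1) (f2 R n2) Nm.
  move=> E P q q' Eq HZ HP.
  pose D := 'X + (Nm q q')%:P.
  have D0 : D != 0 by apply: monic_neq0; rewrite monicXaddC.
  have := @Zlim (map_mx polyC (e1 R n1)) (map_mx polyC (f2 R n2)) (map_mx polyC Nm + 'X *: map_mx polyC E) D D0.
  rewrite /ev !evC ev_line scale0r addr0; apply => t Dt; rewrite !evC ev_line.
  apply: HZ => //; rewrite mxE [(t *: E) q q']mxE Eq mulr1.
  by move: Dt; rewrite /D hornerD hornerX hornerC addrC.
case: (leqP n1 n2) => hle.
  apply: (key (delta_mx i1 j1) (fun M => M i0 j1 = 0) i1 j1); first by rewrite mxE !eqxx.
    by move=> t h1 h2; apply: ZN_gen1.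
  by move=> t; rewrite !mxE h01 /= mulr0 addr0.
apply: (key (delta_mx i0 j0) (fun M => M i0 j1 = 0) i0 j0); first by rewrite mxE !eqxx.
  by move=> t h1 h2; apply: ZN_gen2 => //; apply: ltnW.
by move=> t; rewrite !mxE h01 /= mulr0 addr0.
Qed.


Lemma Z_all v w M : v != 0 -> w != 0 -> (v^T *m M *m w) 0 0 = 0 -> Z v w M.
Proof.
move=> v0 w0 h0.
have [g ug hg] := exists_unit_col i0 v0.
have [h uh hh] := exists_unit_col j1 w0.
pose Nm := g^T *m M *m h.
have N01 : Nm i0 j1 = 0.
  have E1 : (delta_mx (0 : 'I_1) i0 *m Nm *m delta_mx j1 (0 : 'I_1)) 0 0 = Nm i0 j1 by rewrite mulmx_deltaE delta_mulmxE.
  have E2 : delta_mx (0 : 'I_1) i0 *m g^T = v^T by rewrite -hg trmx_mul trmx_delta.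
  rewrite -E1 /Nm !mulmxA E2. rewrite -(mulmxA _ h) hh. exact h0.
have := Z_act (ZN N01) ug uh.
rewrite -e1E -f2E in hg hh. rewrite hg hh /Nm.
have -> : (invmx g)^T *m (g^T *m M *m h) *m invmx h = M.
  rewrite !mulmxA -trmx_mul mulmxV // trmx1 mul1mx.
  by rewrite -mulmxA mulmxV // mulmx1.
done.
Qed.

Lemma Z_eval v w M : Z v w M -> p.@[coords v w M] = 0.
Proof.
move=> HZ; have := HZ 1%:M 1%:M (unitmx1 _ _) (unitmx1 _ _).
by rewrite /actp !mul1mx !invmx1 trmx1 mul1mx mulmx1.
Qed.

End Zsec.


Definition mF (a : 'I_n1) (b : 'I_n2) : 'X_{1.. N} := (U_(iv a) + U_(iM a b) + U_(iw b))%MM.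
Definition F : {mpoly C[N]} := \sum_a \sum_b 'X_[mF a b].

Lemma bilE (v : 'cV[C]_n1) (w : 'cV[C]_n2) (M : 'M[C]_(n1, n2)) :
  (v^T *m M *m w) 0 0 = \sum_a \sum_b v a 0 * M a b * w b 0.
Proof.
rewrite mxE; under eq_bigr do rewrite mxE big_distrl.
rewrite exchange_big /=; apply: eq_bigr => a _; apply: eq_bigr => b _.
by rewrite mxE.
Qed.

Lemma F_eval v w M : F.@[coords v w M] = (v^T *m M *m w) 0 0.
Proof.
rewrite bilE /F raddf_sum /=; apply: eq_bigr => a _.
rewrite raddf_sum /=; apply: eq_bigr => b _.
by rewrite /mF !mpolyXD !mevalM !mevalXU coords_iv coords_iw coords_iM.
Qed.

Lemma sum_ind (P : pred 'I_N) (i : 'I_N) : (\sum_(l | P l) (i == l : nat))%N = P i.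
Proof.
rewrite big_mkcond (bigD1 i) //= big1 => [|l /negbTE].
  by case: (P i); rewrite ?eqxx.
by rewrite eq_sym => ->; case: (P l).
Qed.

Lemma deg_mF a b : [/\ deg1 (mF a b) = 1%N, deg2 (mF a b) = 1%N & deg3 (mF a b) = 1%N].
Proof.
rewrite /deg1 /deg2 /deg3.
have e : forall l : 'I_N, mF a b l = ((iv a == l) + (iM a b == l) + (iw b == l))%N.
  by move=> l; rewrite /mF !mnmDE !mnm1E.
rewrite !(eq_bigr _ (fun l _ => e l)) !big_split /= !sum_ind.
have ha := ltn_ord a; have hb := ltn_ord b; have hM := val_iM a b.
rewrite !val_iv !val_iw.
move: (iM a b : nat) hM => k hk.
split; lia.
Qed.


Lemma F_homog : multihomog F 1 1 1.
Proof.
move=> m; rewrite mcoeff_msupp => Fm.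
case: (pickP (fun ab : 'I_n1 * 'I_n2 => mF ab.1 ab.2 == m)) => [[a b] /eqP <- | none].
  by have [d1 d2 d3] := deg_mF a b; split.
move: Fm; rewrite /F raddf_sum big1 ?eqxx // => a _.
rewrite raddf_sum big1 // => b _.
by change (('X_[mF a b] : {mpoly C[N]})@_m = 0); rewrite mcoeffX (none (a, b)).
Qed.

Lemma F_inv : Ginvariant F.
Proof.
move=> g h ug uh v w M; rewrite /eval_act /act !F_eval.
rewrite trmx_mul !mulmxA.
have gg : g^T *m (invmx g)^T = 1%:M by rewrite -trmx_mul mulVmx // trmx1.
by rewrite -(mulmxA v^T g^T) gg mulmx1 -(mulmxA (v^T *m M)) mulVmx // mulmx1.
Qed.

End S.

Theorem proposition3p3 (R : realType) (n1 n2 : nat) :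
  (2 <= n1)%N -> (2 <= n2)%N ->
  forall (v : 'cV[R[i]]_n1) (w : 'cV[R[i]]_n2) (M : 'M[R[i]]_(n1, n2)),
    v != 0 -> w != 0 -> M != 0 ->
    (unstable v w M <-> in_orbit_closure v w M).
Proof.
move=> H1 H2 v w M v0 w0 _; split.
- move=> Hus a b c p Hp Horb.
  have HZ0 : Z p (e1 R n1) (f2 R n2) (phin R n1 n2).
    by move=> g h ug uh; have := Horb g h ug uh.
  have bil0 : (v^T *m M *m w) 0 0 = 0.
    case: (eqVneq ((v^T *m M *m w) 0 0) 0) => // hn; exfalso.
    apply: Hus; exists 1%N; split => //; exists (F R n1 n2).
    by split; [exact: (F_homog H1 H2) | exact: F_inv | rewrite F_eval].
  exact: (Z_eval (Z_all H1 H2 Hp HZ0 v0 w0 bil0)).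
- move=> Hcl [k [k1 [p [Hp Hinv Hne]]]].
  move/eqP: Hne; apply; apply: (Hcl k k k p Hp) => g h ug uh.
  by rewrite Hinv // (inv_x0 H1 H2 k1 Hp Hinv).
Qed.
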